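(* Let $N\geq1$, $\lambda>0$, and $\alpha_1,\ldots,\alpha_N\geq0$. Consider the problem $\max_{p\in\Delta_N}\ell(p):=\sum_{i=1}^N\frac{p_i}{1+2\lambda p_i}\alpha_i$. Let $(\ell_1,\ldots,\ell_N)$ be a permutation of $\{1,\ldots,N\}$ such that $\alpha_{\ell_1}\leq\cdots\leq\alpha_{\ell_N}$, with $\alpha_{\ell_N}>0$, and let $A_i=\{\ell_1,\ldots,\ell_i\}$ for $i\in\{1,\ldots,N\}$, $A_0=\emptyset$. Define $k=\min\left\{i\in\{0,\ldots,N-1\}:(N-i+2\lambda)\sqrt{\alpha_{\ell_{i+1}}}>\sum_{j\notin A_i}\sqrt{\alpha_j}\right\}$. Then $\overline{p}\in\mathbb{R}^N$ defined by $\overline{p}_i=0$ if $i\in A_k$ and $\overline{p}_i=\frac{1}{2\lambda}\left[\frac{(N-k+2\lambda)\sqrt{\alpha_i}}{\sum_{j\notin A_k}\sqrt{\alpha_j}}-1\right]$ if $i\notin A_k$, is the solution of this problem.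
   Context: $\Delta_N=\{p\in\mathbb{R}_+^N:\sum_{i=1}^Np_i=1\}$. *)

(* Defs.v *)
From HB Require Import structures.
From mathcomp Require Import all_boot all_order all_algebra all_fingroup.
From mathcomp Require Import all_reals.
Set Implicit Arguments. Unset Strict Implicit. Unset Printing Implicit Defensive.
Import Order.TTheory GRing.Theory Num.Theory.
Local Open Scope ring_scope.

Definition simplex (R : realType) (N : nat) (p : 'I_N -> R) : Prop :=
  (forall i, 0 <= p i) /\ \sum_(i < N) p i = 1.

Definition objective (R : realType) (N : nat) (lam : R) (alpha : 'I_N -> R)
  (p : 'I_N -> R) : R :=
  \sum_(i < N) p i / (1 + 2 * lam * p i) * alpha i.

(* A_i = { l_1, ..., l_i } (0-indexed: the images of the first i positions). *)
Definition Aset (N : nat) (l : {perm 'I_N}) (i : nat) : {set 'I_N} :=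
  l @: [set j : 'I_N | (j < i)%N].

(* Condition defining k, for i in {0,...,N-1} (l_{i+1} is l i in 0-indexing):
   (N - i + 2 lambda) sqrt(alpha_{l_{i+1}}) > sum_{j notin A_i} sqrt(alpha_j). *)
Definition kcond (R : realType) (N : nat) (lam : R) (alpha : 'I_N -> R)
  (l : {perm 'I_N}) (i : 'I_N) : Prop :=
  \sum_(j < N | j \notin Aset l i) Num.sqrt (alpha j)
    < ((N - i)%:R + 2 * lam) * Num.sqrt (alpha (l i)).

Definition pbar (R : realType) (N : nat) (lam : R) (alpha : 'I_N -> R)
  (l : {perm 'I_N}) (k : nat) (i : 'I_N) : R :=
  if i \in Aset l k then 0
  else (2 * lam)^-1 *
       (((N - k)%:R + 2 * lam) * Num.sqrt (alpha i)
          / (\sum_(j < N | j \notin Aset l k) Num.sqrt (alpha j)) - 1).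

(* Main.v *)
Require Import Defs.
From HB Require Import structures.
From mathcomp Require Import all_boot all_order all_algebra all_fingroup.
From mathcomp Require Import all_reals.
From mathcomp Require Import ring lra zify.
From Stdlib Require Import Lia.
Import Order.TTheory GRing.Theory Num.Theory.
Local Open Scope ring_scope.

Lemma hA (R : realType) (lam p al m : R) : 0 < lam -> 0 <= p -> 0 <= al -> al <= m -> 0 < m ->
  p / (1 + 2 * lam * p) * al <= 0 / (1 + 2 * lam * 0) * al + m * (p - 0) /\
  (0 / (1 + 2 * lam * 0) * al + m * (p - 0) = p / (1 + 2 * lam * p) * al -> p = 0).
Proof.
move=> hl hp ha ham hm.
have hu : 0 < 1 + 2 * lam * p by nra.
have e : p / (1 + 2 * lam * p) * al = p * al / (1 + 2 * lam * p) by rewrite mulrAC.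
rewrite e subr0 mul0r mul0r add0r; split.
  rewrite ler_pdivrMr //.
  have h1 : 0 <= p * (m - al) by apply: mulr_ge0; lra.
  have h2 : 0 <= lam * m * (p * p) by apply: mulr_ge0; [apply: mulr_ge0; lra | nra].
  nra.
move=> h0; have h : m * p * (1 + 2 * lam * p) = p * al by rewrite h0 divfK ?gt_eqF.
have h1 : 0 <= p * (m - al) by apply: mulr_ge0; lra.
have h3 : lam * m * (p * p) = 0.
  have h2 : 0 <= lam * m * (p * p) by apply: mulr_ge0; [apply: mulr_ge0; lra | nra].
  nra.
move/eqP: h3; rewrite !mulf_eq0 (gt_eqF hl) (gt_eqF hm) /= orbb => /eqP //.
Qed.

Lemma hB (R : realType) (lam p a c : R) : 0 < lam -> 0 <= p -> 0 < c -> c < a ->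
  let q := (2 * lam)^-1 * (a / c - 1) in
  p / (1 + 2 * lam * p) * a ^+ 2 <= q / (1 + 2 * lam * q) * a ^+ 2 + c ^+ 2 * (p - q) /\
  (q / (1 + 2 * lam * q) * a ^+ 2 + c ^+ 2 * (p - q) = p / (1 + 2 * lam * p) * a ^+ 2 -> p = q).
Proof.
move=> hl hp hc hca q.
have hu : 0 < 1 + 2 * lam * p by nra.
have hv : 1 + 2 * lam * q = a / c.
  rewrite /q; field; apply/andP; split; rewrite gt_eqF //.
have key : q / (1 + 2 * lam * q) * a ^+ 2 + c ^+ 2 * (p - q) - p / (1 + 2 * lam * p) * a ^+ 2
   = (c * (1 + 2 * lam * p) - a) ^+ 2 / (2 * lam * (1 + 2 * lam * p)).
  rewrite hv /q; field.
  by rewrite !gt_eqF //; nra.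
have hpos : 0 <= (c * (1 + 2 * lam * p) - a) ^+ 2 / (2 * lam * (1 + 2 * lam * p)).
  apply: divr_ge0; [exact: sqr_ge0 | nra].
split; first by rewrite -subr_ge0 key.
move=> /eqP; rewrite -subr_eq0 key mulf_eq0 invr_eq0 sqrf_eq0 (gt_eqF (_ : 0 < 2 * lam * (1 + 2 * lam * p))); last nra.
rewrite orbF subr_eq0 => /eqP h.
have : 1 + 2 * lam * p = 1 + 2 * lam * q by rewrite hv -h; field; rewrite gt_eqF.
move=> h2; have : 2 * lam * p = 2 * lam * q by lra.
by move/mulfI; apply; rewrite gt_eqF //; lra.
Qed.

Lemma natL1 (t k : nat) : (0 < k)%N -> (~~ (t < k.-1)%N && (t != k.-1)) = ~~ (t < k)%N.
Proof. move=> h; apply/idP/idP; [move=> /andP [h1 h2]|move=> h1; apply/andP; split]; lia. Qed.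
Lemma natL2 (k N : nat) : (k < N)%N -> (k.-1 < N)%N. Proof. lia. Qed.
Lemma natL3 (k : nat) : (0 < k)%N -> (k.-1 < k)%N. Proof. lia. Qed.
Lemma natL4 (k N : nat) : (0 < k)%N -> (k < N)%N -> (N - k.-1)%N = (N - k).+1. Proof. lia. Qed.
Lemma natL5 (t k : nat) : (t < k)%N -> (t <= k.-1)%N. Proof. lia. Qed.
Lemma natL6 (t k : nat) : ~~ (t < k)%N -> (k <= t)%N. Proof. lia. Qed.
Lemma natL7 (a b n : nat) : (a + b)%N = n -> b = (n - a)%N. Proof. lia. Qed.

Theorem proposition2p3 (R : realType) (N : nat) (lam : R) (alpha : 'I_N -> R)
  (l : {perm 'I_N}) (k : 'I_N) :
  (0 < N)%N ->
  0 < lam ->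
  (forall i, 0 <= alpha i) ->
  (forall i j : 'I_N, (i <= j)%N -> alpha (l i) <= alpha (l j)) ->
  (forall i : 'I_N, (i.+1 = N)%N -> 0 < alpha (l i)) ->
  (* k is the minimum of { i in {0,...,N-1} : kcond i } *)
  kcond lam alpha l k ->
  (forall i : 'I_N, (i < k)%N -> ~ kcond lam alpha l i) ->
  simplex (pbar lam alpha l k) /\
  (forall p, simplex p -> objective lam alpha p <= objective lam alpha (pbar lam alpha l k)) /\
  (forall p, simplex p -> objective lam alpha p = objective lam alpha (pbar lam alpha l k) ->
     forall i, p i = pbar lam alpha l k i).
Proof.
move=> hN hl ha hsort htop hk hmin.
have memA : forall (n : nat) i, (i \in Aset l n) = ((l^-1)%g i < n)%N.
  move=> n i; rewrite /Aset -{1}(permKV l i) mem_imset ?inE //; exact: perm_inj.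
set A := Aset l k.
set S := \sum_(j < N | j \notin A) Num.sqrt (alpha j).
set M := (N - k)%:R : R.
have hM : 0 <= M by rewrite /M ler0n.
have hlk : l k \notin A by rewrite memA permK ltnn.
have SGE : Num.sqrt (alpha (l k)) <= S.
  rewrite /S (bigD1 (l k)) //= lerDl; apply: sumr_ge0 => i _; exact: sqrtr_ge0.
have hk' : S < (M + 2 * lam) * Num.sqrt (alpha (l k)) := hk.
have skpos : 0 < Num.sqrt (alpha (l k)).
  rewrite lt_neqAle sqrtr_ge0 andbT; apply/eqP => h0.
  move: hk' SGE; rewrite -h0 mulr0; clear; lra.
have Spos : 0 < S by clear - skpos SGE; lra.
have hM2 : 0 < M + 2 * lam by clear - hM hl; lra.
set c := S / (M + 2 * lam).
have hc : 0 < c by rewrite /c divr_gt0.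
have notA : forall i, i \notin A -> c < Num.sqrt (alpha i).
  move=> i hi.
  have h1 : Num.sqrt (alpha (l k)) <= Num.sqrt (alpha i).
    rewrite ler_sqrt //.
    have := hsort k ((l^-1)%g i); rewrite permKV; apply.
    by move: hi; rewrite memA => /natL6.
  have h2 : c < Num.sqrt (alpha (l k)) by rewrite /c ltr_pdivrMr // mulrC.
  exact: lt_le_trans h2 h1.
have inA : forall i, i \in A -> Num.sqrt (alpha i) <= c.
  move=> i hi; have [k0|kpos] := posnP k.
    by move: hi; rewrite memA k0.
  have hk1 : (k.-1 < N)%N by apply: natL2.
  set k' := Ordinal hk1.
  have Sk : \sum_(j < N | j \notin Aset l k') Num.sqrt (alpha j) = S + Num.sqrt (alpha (l k')).
    rewrite (bigD1 (l k')) /=; last by rewrite memA permK ltnn.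
    rewrite addrC; congr (_ + _); apply: eq_bigl => j.
    rewrite !memA -(inj_eq (@perm_inj _ (l^-1)%g)) permK -(inj_eq val_inj) /=.
    exact: natL1.
  have nk := hmin k' (@natL3 k kpos).
  rewrite /kcond Sk in nk.
  have nk2 : ((N - k')%:R + 2 * lam) * Num.sqrt (alpha (l k')) <= S + Num.sqrt (alpha (l k')).
    by rewrite leNgt; apply/negP.
  have eNk : (N - k')%:R = M + 1 :> R.
    by rewrite /M natr1 /= natL4.
  rewrite eNk mulrDl mulrDl mul1r addrAC lerD2r -mulrDl in nk2.
  have h3 : Num.sqrt (alpha (l k')) <= c.
    by rewrite /c ler_pdivlMr // mulrC.
  apply: le_trans h3; rewrite ler_sqrt //.
  have := hsort ((l^-1)%g i) k'; rewrite permKV; apply.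
  by move: hi; rewrite memA /= => /natL5.
pose P := pbar lam alpha l k.
have PA : forall i, i \in A -> P i = 0 by move=> i hi; rewrite /P /pbar -/A hi.
have PnA : forall i, i \notin A -> P i = (2 * lam)^-1 * (Num.sqrt (alpha i) / c - 1).
  move=> i hi; rewrite /P /pbar -/A (negbTE hi) -/S -/M /c; congr (_ * (_ - _)).
  field; rewrite !gt_eqF //.
have coord : forall i x, 0 <= x ->
    x / (1 + 2 * lam * x) * alpha i <= P i / (1 + 2 * lam * P i) * alpha i + c ^+ 2 * (x - P i) /\
    (P i / (1 + 2 * lam * P i) * alpha i + c ^+ 2 * (x - P i) = x / (1 + 2 * lam * x) * alpha i -> x = P i).
  move=> i x hx; case: (boolP (i \in A)) => hi.
    rewrite (PA i hi); apply: hA => //; last by apply: exprn_gt0.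
    rewrite -(sqr_sqrtr (ha i)); have := inA i hi; have := sqrtr_ge0 (alpha i).
    rewrite !expr2; clear - hc; nra.
  rewrite (PnA i hi); have := @hB _ lam x _ c hl hx hc (notA i hi); rewrite /= sqr_sqrtr //.
have P1 : \sum_(i < N) P i = 1.
  rewrite (bigID (fun i => i \in A)) /= big1 ?add0r; last by move=> i hi; rewrite PA.
  rewrite (eq_bigr (fun i => (2 * lam)^-1 * (Num.sqrt (alpha i) / c) - (2 * lam)^-1)); last first.
    by move=> i hi; rewrite PnA // mulrBr mulr1.
  rewrite sumrB -mulr_sumr -mulr_suml -/S.
  have -> : \sum_(i < N | i \notin A) (2 * lam)^-1 = (2 * lam)^-1 * M.
    have cA : #|A| = k.
      rewrite /A /Aset card_imset; last exact: perm_inj.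
      rewrite cardsE -sum1_card.
      transitivity (\sum_(i < N | (i < k)%N) 1%N).
        by apply: eq_bigl => i; rewrite ?inE.
      rewrite -(big_ord_widen N (fun _ => 1%N) (ltnW (ltn_ord k))).
      by rewrite sum1_card card_ord.
    transitivity (\sum_(i in ~: A) (2 * lam)^-1); first by apply: eq_bigl => i; rewrite inE.
    rewrite sumr_const /M mulr_natr; congr (_ *+ _).
    have h := cardsC A; rewrite cA card_ord in h; exact: natL7 h.
  rewrite /c; field; rewrite !gt_eqF //.
have Pge0 : forall i, 0 <= P i.
  move=> i; case: (boolP (i \in A)) => hi; first by rewrite PA.
  rewrite PnA //; apply: mulr_ge0; first by rewrite invr_ge0; clear - hl; lra.
  rewrite subr_ge0 ler_pdivlMr // mul1r; exact/ltW/notA.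
have key : forall p, simplex p ->
    \sum_(i < N) (P i / (1 + 2 * lam * P i) * alpha i + c ^+ 2 * (p i - P i)) = objective lam alpha P.
  move=> p [_ hp1]; rewrite big_split /= -mulr_sumr sumrB hp1 P1 subrr mulr0 addr0 //.
split; first by split.
split.
  move=> p hp; change (objective lam alpha p <= objective lam alpha P).
  rewrite -(key p hp) /objective; apply: ler_sum => i _.
  by have [] := coord i (p i) (hp.1 i).
move=> p hp heq i; change (objective lam alpha p = objective lam alpha P) in heq; change (p i = P i).
have hs : \sum_(i < N) ((P i / (1 + 2 * lam * P i) * alpha i + c ^+ 2 * (p i - P i))
    - p i / (1 + 2 * lam * p i) * alpha i) = 0.
  by rewrite sumrB key // -heq subrr.
have hnn : forall j : 'I_N, true -> 0 <= (P j / (1 + 2 * lam * P j) * alpha j + c ^+ 2 * (p j - P j))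
    - p j / (1 + 2 * lam * p j) * alpha j.
  move=> j _; rewrite subr_ge0; by have [] := coord j (p j) (hp.1 j).
have := psumr_eq0P hnn hs (i := i) isT.
move/eqP; rewrite subr_eq0 => /eqP.
exact: (coord i (p i) (hp.1 i)).2.
Qed.
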